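(* Let $n,m\ge 1$, $X=\{x_1,\dots,x_m\}$, and for each $1\le i\le n$ let $A_i,B_i$ be nonempty subsets of $X$ with $A_i\cap B_i=\emptyset$. Let $Y=\{y_1,\dots,y_n\}$ be a set disjoint from $X$, and let $\Sigma'$ be the set of implications on $X\cup Y$ consisting of $(A_i\cup (Y\setminus\{y_i\}))\rightarrow B_i$ for $1\le i\le n$, together with $Y\rightarrow X$. Then the closure system on $X\cup Y$ associated with $\Sigma'$ is a convex geometry.
   Context: A closure operator on a set $X$ is a map $\phi:\mathcal P(X)\to\mathcal P(X)$ that is extensive, monotone and idempotent; its image consists of the closed sets. An implication on a set $Z$ is a pair $A\rightarrow B$ with $A,B\subseteq Z$, $B\ne\emptyset$. For a set $\Sigma$ of implications on $Z$, the associated closure system has as closed sets exactly the $S\subseteq Z$ such that $A\subseteq S$ implies $B\subseteq S$ for every $(A\rightarrow B)\in\Sigma$. A convex geometry is a finite closure system $\langle Z,\phi\rangle$ with $\phi(\emptyset)=\emptyset$ satisfying the anti-exchange property: for every closed set $A\subsetneq Z$ and all distinct $x,y\in Z\setminus A$, $y\notin\phi(A\cup\{x\})$ or $x\notin\phi(A\cup\{y\})$ (equivalently, for every closed $A\subsetneq Z$ there is $x\in Z\setminus A$ with $A\cup\{x\}$ closed). *)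

(* Defs.v *)
From mathcomp Require Import all_boot.
Set Implicit Arguments. Unset Strict Implicit. Unset Printing Implicit Defensive.

Section Closure.
Variable T : finType.

Definition implication := ({set T} * {set T})%type.

Definition wf_implication (p : implication) : bool := p.2 != set0.

Definition closed_for (Sigma : seq implication) (S : {set T}) : bool :=
  all (fun p : implication => (p.1 \subset S) ==> (p.2 \subset S)) Sigma.

Definition closure_of (closed : pred {set T}) (S : {set T}) : {set T} :=
  \bigcap_(C | closed C && (S \subset C)) C.

(* The family of closed sets forms a closure system: closed under arbitrary
   intersections (the empty intersection being the whole set T). *)
Definition closure_system (closed : pred {set T}) : Prop :=
  forall F : {set {set T}}, (forall C, C \in F -> closed C) ->
    closed (\bigcap_(C in F) C).

Definition convex_geometry (closed : pred {set T}) : Prop :=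
  [/\ closure_system closed,
      closure_of closed set0 = set0 &
      forall A : {set T}, closed A -> A != setT ->
        forall x y : T, x != y -> x \notin A -> y \notin A ->
          (y \notin closure_of closed (x |: A)) ||
          (x \notin closure_of closed (y |: A))].
End Closure.

(* The implication set Sigma' on X u Y, with X = 'I_m (as inl) and Y = 'I_n (as inr). *)
Definition Sigma' (m n : nat) (A B : 'I_n -> {set 'I_m})
  : seq (implication ('I_m + 'I_n)%type) :=
  [seq ((inl @: A i) :|: (inr @: (~: [set i])), inl @: B i) | i <- enum 'I_n]
  ++ [:: (inr @: [set: 'I_n], inl @: [set: 'I_m])].

(* Main.v *)
Require Import Defs.
From mathcomp Require Import all_boot.
Set Implicit Arguments. Unset Strict Implicit. Unset Printing Implicit Defensive.

Section S.
Variables (m n : nat) (A B : 'I_n -> {set 'I_m}).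
Local Notation T := ('I_m + 'I_n)%type.
Local Notation inL := (@inl 'I_m 'I_n).
Local Notation inR := (@inr 'I_m 'I_n).
Local Notation cld := (closed_for (Sigma' A B)).

Definition Pj (S : {set T}) (j : 'I_n) : bool :=
  [&& inR j \notin S, inR @: (~: [set j]) \subset S & inL @: A j \subset S].

Definition cl (S : {set T}) : {set T} :=
  S :|: \bigcup_(j | Pj S j) inL @: B j.

Lemma inr_cl (S : {set T}) j : (inR j \in cl S) = (inR j \in S).
Proof.
rewrite /cl in_setU; case: (inR j \in S) => //=.
apply/bigcupP => [[k _ /imsetP [a _ //]]].
Qed.

Lemma inr_sub (S : {set T}) (U : {set 'I_n}) : inR @: U \subset cl S -> inR @: U \subset S.
Proof.
move=> H; apply/subsetP => z /imsetP [k kU ->].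
rewrite -inr_cl; apply: (subsetP H); exact: imset_f.
Qed.

Lemma Pj_eq (S : {set T}) k i : Pj S k -> inR i \notin S -> k = i.
Proof.
case/and3P => _ H _ Hi; apply/eqP; rewrite eq_sym; apply/negP => /negP ik.
move/negP: Hi; apply; apply: (subsetP H); apply: imset_f.
by rewrite !inE.
Qed.

Lemma closedP (S : {set T}) : cld S ->
  (forall i, inL @: A i :|: inR @: (~: [set i]) \subset S -> inL @: B i \subset S) /\
  (inR @: setT \subset S -> inL @: setT \subset S).
Proof.
move/allP => H; split.
  move=> i; apply/implyP; apply: (H (_,_)); rewrite mem_cat; apply/orP; left.
  by apply/mapP; exists i; rewrite ?mem_enum.
by apply/implyP; apply: (H (_,_)); rewrite mem_cat mem_seq1 eqxx orbT.
Qed.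

Lemma cl_closed (S : {set T}) : ~~ (inR @: setT \subset S) -> cld (cl S).
Proof.
move=> hY; apply/allP => p; rewrite mem_cat => /orP [/mapP [i _ ->] | ].
  apply/implyP => /= H.
  have HY : inR @: (~: [set i]) \subset S.
    apply: inr_sub; apply: subset_trans H; exact: subsetUr.
  have hi : inR i \notin S.
    apply/negP => hi; move/negP: hY; apply; apply/subsetP => z /imsetP [k _ ->].
    case: (eqVneq k i) => [->//|ki]; apply: (subsetP HY); apply: imset_f.
    by rewrite !inE.
  have Pi : Pj S i.
    rewrite /Pj hi HY /=; apply/subsetP => z za.
    have : z \in cl S by apply: (subsetP H); rewrite in_setU za.
    rewrite /cl in_setU => /orP [//|/bigcupP [k Pk zk]].
    have ki := Pj_eq Pk hi; subst k.
    move: Pk; rewrite /Pj => /and3P [_ _ /subsetP]; apply => //.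
  apply/subsetP => z zB; rewrite /cl in_setU; apply/orP; right.
  by apply/bigcupP; exists i.
rewrite mem_seq1 => /eqP -> /=; apply/implyP => /inr_sub H.
by rewrite H in hY.
Qed.

Lemma notin_closure (C S : {set T}) z :
  cld C -> S \subset C -> z \notin C -> z \notin closure_of cld S.
Proof.
move=> Cc SC zC; apply/negP => /bigcapP H.
by move: (H C); rewrite Cc SC => /(_ isT); apply/negP.
Qed.

Lemma cl_sub (S : {set T}) : S \subset cl S.
Proof. exact: subsetUl. Qed.

Lemma side (X : {set T}) x y : cld X -> ~~ (inR @: setT \subset X) ->
  x != y -> x \notin X -> y \notin X -> inR @: setT \subset x |: X ->
  x \notin closure_of cld (y |: X).
Proof.
move=> Xc YX xy xX yX H.
have [k xk] : exists k, x = inR k.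
  case: x xy xX H => [a|k] xy xX H; last by exists k.
  case/negP: YX; apply/subsetP => z zY.
  move: (subsetP H z zY); rewrite in_setU1 => /orP [/eqP ez|//].
  by case/imsetP: zY ez => ? _ ->.
subst x.
have [b yb] : exists b, y = inL b.
  case: y xy yX => [b|l] xy yX; first by exists b.
  move: (subsetP H (inR l) (imset_f _ (in_setT l))); rewrite in_setU1.
  by rewrite eq_sym (negbTE xy) (negbTE yX).
subst y.
have hY : ~~ (inR @: setT \subset inL b |: X).
  apply/negP => /subsetP /(_ (inR k) (imset_f _ (in_setT k))).
  by rewrite in_setU1 (negbTE xX).
apply: (notin_closure (cl_closed hY) (cl_sub _)).
by rewrite inr_cl in_setU1.
Qed.

Lemma core (X : {set T}) x y : cld X ->
  (forall i, A i :&: B i = set0) ->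
  x != y -> x \notin X -> y \notin X ->
  y \in cl (x |: X) -> x \in cl (y |: X) -> False.
Proof.
move=> Xc hAB xy xX yX.
rewrite /cl in_setU in_setU1 eq_sym (negbTE xy) (negbTE yX) /=.
move=> /bigcupP [j Pj' /imsetP [y' y'B ey]]; subst y.
rewrite in_setU in_setU1 (negbTE xy) (negbTE xX) /=.
move=> /bigcupP [k Pk /imsetP [x' x'B ex]]; subst x.
case/and3P: Pj' => rj Hj Aj.
case/and3P: Pk => rk Hk Ak.
have rjX : inR j \notin X by move: rj; rewrite in_setU1.
have jk : j = k.
  apply/eqP; apply/negP => /negP jk; move/negP: rjX; apply.
  have jk' : j \in ~: [set k] by rewrite !inE.
  by move: (subsetP Hk (inR j) (imset_f _ jk')); rewrite in_setU1.
subst k.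
have HjX : inR @: (~: [set j]) \subset X.
  apply/subsetP => z zz; move: (subsetP Hj z zz); rewrite in_setU1 => /orP [/eqP ez|//].
  by case/imsetP: zz ez => ? _ ->.
have x'A : x' \in A j.
  apply/negP => /negP x'A.
  have AjX : inL @: A j \subset X.
    apply/subsetP => z zz; move: (subsetP Aj z zz); rewrite in_setU1 => /orP [/eqP ez|//].
    case/imsetP: zz ez => a aA -> [ea]; subst a; by rewrite aA in x'A.
  have := (closedP Xc).1 j; rewrite subUset AjX HjX => /(_ isT) /subsetP /(_ (inL y')).
  by rewrite imset_f // (negbTE yX) => /(_ isT).
have : x' \in A j :&: B j by rewrite inE x'A.
by rewrite hAB inE.
Qed.

End S.

Theorem claim1 (m n : nat) (A B : 'I_n -> {set 'I_m}) :
  0 < m -> 0 < n ->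
  (forall i, A i != set0) ->
  (forall i, B i != set0) ->
  (forall i, A i :&: B i = set0) ->
  convex_geometry (closed_for (Sigma' A B)).
Proof.
move=> m0 n0 hA hB hAB; split.
- move=> F HF; apply/allP => p pS; apply/implyP => H.
  apply/subsetP => z zp; apply/bigcapP => C CF.
  move/allP: (HF C CF) => /(_ p pS) /implyP HC.
  apply: (subsetP (HC _)) zp.
  apply: subset_trans H _; exact: bigcap_inf.
- have s0 : closed_for (Sigma' A B) set0.
    apply/allP => p; rewrite mem_cat => /orP [/mapP [i _ ->] | ].
      apply/implyP; rewrite subset0 setU_eq0 => /andP [/eqP H _].
      case/set0Pn: (hA i) => a aA.
      by move: (imset_f (@inl 'I_m 'I_n) aA); rewrite H inE.
    rewrite mem_seq1 => /eqP -> /=; apply/implyP; rewrite subset0 => /eqP H.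
    by move: (imset_f (@inr 'I_m 'I_n) (in_setT (Ordinal n0))); rewrite H inE.
  apply/eqP; rewrite -subset0; apply/subsetP => z /bigcapP /(_ set0).
  by rewrite s0 sub0set => /(_ isT).
- move=> X Xc XT x y xy xX yX.
  have YX : ~~ (@inr 'I_m 'I_n @: setT \subset X).
    apply/negP => H; move/negP: XT; apply; apply/eqP/setP => z.
    rewrite inE; case: z => [a|b].
      by apply: (subsetP ((closedP Xc).2 H)); apply: imset_f.
    by apply: (subsetP H); apply: imset_f.
  case h1: (@inr 'I_m 'I_n @: setT \subset x |: X).
    by rewrite (side Xc YX xy xX yX h1) orbT.
  case h2: (@inr 'I_m 'I_n @: setT \subset y |: X).
    by rewrite eq_sym in xy; rewrite (side Xc YX xy yX xX h2).
  case: (boolP (y \in cl A B (x |: X))) => hy; last first.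
    by rewrite (notin_closure (cl_closed A B (negbT h1)) (cl_sub _ _ _) hy).
  case: (boolP (x \in cl A B (y |: X))) => hx; last first.
    by rewrite (notin_closure (cl_closed A B (negbT h2)) (cl_sub _ _ _) hx) orbT.
  by case: (core Xc hAB xy xX yX hy hx).
Qed.
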